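(* Let $\mu$ be an Ising model on $\{-1,1\}^p$ with $\ell_1$-width at most $\gamma>0$ and $u\in[p]$. For every $\underline\theta_u\in\mathbb R^p$ with $\|\underline\theta_u\|_1\le\gamma$, \[ \mathcal L_u(\underline\theta_u)-\mathcal L_u(\underline\theta^*_u)-\langle\nabla\mathcal L_u(\underline\theta^*_u),\underline\theta_u-\underline\theta^*_u\rangle\ \ge\ \frac{e^{-3\gamma}}{2+2\gamma}\max_{v\ne u}|\theta_{u,v}-\theta^*_{u,v}|^2 . \]
   Context: Ising model: $\mu(\underline\sigma)\propto\exp\big(\sum_{\{u,v\}}\theta^*_{u,v}\sigma_u\sigma_v+\sum_u\theta^*_u\sigma_u\big)$ on $\{-1,1\}^p$, first sum over unordered pairs of distinct indices, symmetric couplings $\theta^*_{u,v}=\theta^*_{v,u}$; $\ell_1$-width at most $\gamma$ means $\sum_{v\ne u}|\theta^*_{u,v}|+|\theta^*_u|\le\gamma$ for all $u$. Local parameter vector $\underline\theta_u=(\theta_u,(\theta_{u,v})_{v\ne u})\in\mathbb R^p$ with true value $\underline\theta^*_u=(\theta^*_u,(\theta^*_{u,v})_{v\ne u})$; local energy $E_u(\underline\sigma;\underline\theta_u)=\sigma_u(\theta_u+\sum_{v\ne u}\theta_{u,v}\sigma_v)$; interaction screening loss $\mathcal L_u(\underline\theta_u)=\mathbb E_\mu[e^{-E_u(\underline\sigma;\underline\theta_u)}]$. *)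

(* Defs.v *)
From HB Require Import structures.
From mathcomp Require Import all_boot all_order all_algebra.
From mathcomp Require Import all_classical all_reals all_analysis.
Set Implicit Arguments. Unset Strict Implicit. Unset Printing Implicit Defensive.
Import Order.TTheory GRing.Theory Num.Theory.
Import numFieldNormedType.Exports.
Local Open Scope ring_scope.

Section Ising.
Variables (R : realType) (p : nat).

(* Configurations sigma in {-1,1}^p, encoded by booleans (true = +1). *)
Definition config := {ffun 'I_p -> bool}.
Definition spin (x : config) (i : 'I_p) : R := if x i then 1 else -1.

Definition ising_energy (theta : 'I_p -> 'I_p -> R) (h : 'I_p -> R)
  (x : config) : R :=
  \sum_(i : 'I_p) \sum_(j : 'I_p | (i < j)%N) theta i j * spin x i * spin x j
  + \sum_(i : 'I_p) h i * spin x i.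

Definition ising_Z (theta : 'I_p -> 'I_p -> R) (h : 'I_p -> R) : R := \sum_(x : config) expR (ising_energy theta h x).

Definition ising_mu (theta : 'I_p -> 'I_p -> R) (h : 'I_p -> R) (x : config) : R :=
  expR (ising_energy theta h x) / ising_Z theta h.

Definition l1_width_le (theta : 'I_p -> 'I_p -> R) (h : 'I_p -> R) (gamma : R) : Prop :=
  forall u : 'I_p, \sum_(v : 'I_p | v != u) `|theta u v| + `|h u| <= gamma.

(* Local parameter vector theta_u in R^p: coordinate u holds the field
   component theta_u, coordinate v <> u holds the coupling theta_{u,v}. *)
Definition theta_star (theta : 'I_p -> 'I_p -> R) (h : 'I_p -> R) (u : 'I_p) : 'rV[R]_p :=
  \row_(w < p) (if w == u then h u else theta u w).

Definition local_energy (u : 'I_p) (x : config) (t : 'rV[R]_p) : R :=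
  spin x u * (t ord0 u + \sum_(v : 'I_p | v != u) t ord0 v * spin x v).

Definition ISO_loss (theta : 'I_p -> 'I_p -> R) (h : 'I_p -> R) (u : 'I_p) (t : 'rV[R]_p) : R :=
  \sum_(x : config) ising_mu theta h x * expR (- local_energy u x t).

Definition grad_inner (f : 'rV[R]_p -> R) (a d : 'rV[R]_p) : R :=
  \sum_(w : 'I_p) d ord0 w * 'D_(delta_mx ord0 w) f a.

Definition l1norm (t : 'rV[R]_p) : R := \sum_(w : 'I_p) `|t ord0 w|.

End Ising.

(* Main.v *)
Require Import Defs.
From HB Require Import structures.
From mathcomp Require Import all_boot all_order all_algebra.
From mathcomp Require Import all_classical all_reals all_analysis.
From mathcomp Require Import ring lra.
Import Order.TTheory GRing.Theory Num.Theory.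
Import numFieldNormedType.Exports.
Local Open Scope ring_scope.
Set Implicit Arguments. Unset Strict Implicit. Unset Printing Implicit Defensive.

Lemma mvt_ge (R : realType) (f df : R -> R) (z : R) :
  0 <= z -> (forall s : R, is_derive s (1:R) f (df s)) -> (forall s, 0 <= s -> 0 <= df s) ->
  f 0 <= f z.
Proof.
move=> z0 fd dfp.
have [c c0z E] : exists2 c, c \in `[0, z]%R & f z - f 0 = df c * (z - 0).
  apply: MVT_segment => //. 
  apply/continuous_subspaceT => r.
  apply/differentiable_continuous/derivable1_diffP.
  by have [] := fd r.
rewrite -subr_ge0 E mulr_ge0 ?subr0 // dfp //.
by move: c0z; rewrite in_itv /= => /andP[].
Qed.

Lemma der_expN (R : realType) (s : R) : is_derive s (1:R) (fun s => expR (- s)) (- expR (- s)).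
Proof.
have -> : (fun s => expR (- s)) = expR \o (fun s => - s) by [].
apply: is_derive_eq.
by rewrite mulrN1.
Qed.

Lemma expN_ineq1 (R : realType) (z : R) : 0 <= z -> 2 - z <= expR (- z) * (2 + z).
Proof.
move=> z0.
pose f := fun s : R => expR (- s) * (2 + s) + s.
suff : f 0 <= f z by rewrite /f oppr0 expR0 mul1r addr0; lra.
apply: (@mvt_ge _ _ (fun s => 1 - expR (-s) * (1 + s))) => //.
  move=> s; rewrite /f.
  apply: is_derive_eq.
  rewrite /= !add0r -![_ *: _]/(_ * _); lra.
move=> s s0.
rewrite subr_ge0 (le_trans (ler_wpM2l (expR_ge0 _) (expR_ge1Dx s))) //.
by rewrite expRN mulVf // gt_eqF // expR_gt0.
Qed.

Lemma exp_ineq2 (R : realType) (y : R) : 0 <= y -> 1 + y + y ^+ 2 / 2 <= expR y.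
Proof.
move=> y0.
pose f := fun s : R => expR s - s - s ^+ 2 / 2.
suff : f 0 <= f y by rewrite /f expR0 expr0n /= mul0r !subr0; lra.
apply: (@mvt_ge _ _ (fun s => expR s - 1 - s)) => //.
  move=> s; rewrite /f.
  apply: is_derive_eq.
  rewrite /= !scaler0 add0r -![_ *: _]/(_ * _); lra.
move=> s s0.
by have := expR_ge1Dx s; lra.
Qed.

Lemma key_ineq (R : realType) (z : R) : z ^+ 2 / (2 + `|z|) <= expR (- z) - 1 + z.
Proof.
have [z0|z0] := leP 0 z.
  rewrite ger0_norm // ler_pdivrMr; last lra.
  have := @expN_ineq1 _ z z0; nra.
rewrite ltr0_norm //.
have := @exp_ineq2 _ (- z) ltac:(lra).
rewrite ler_pdivrMr; last lra.
rewrite sqrrN; nra.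
Qed.

Definition cc (R : realType) (p : nat) (u : 'I_p) (x : config p) (w : 'I_p) : R :=
  spin R x u * (if w == u then 1 else spin R x w).

Arguments cc {R p}.

Lemma LE_lin (R : realType) (p : nat) (u : 'I_p) (x : config p) (t : 'rV[R]_p) :
  local_energy u x t = \sum_w t ord0 w * cc u x w.
Proof.
rewrite /local_energy [RHS](bigD1 u) //= /cc eqxx mulr1 mulrDr mulrC; congr (_ + _).
rewrite mulr_sumr; apply: eq_bigr => w /negbTE ->; exact: mulrCA.
Qed.

Lemma LE_affine (R : realType) (p : nat) (u : 'I_p) (x : config p) (k : R) (v a : 'rV[R]_p) :
  local_energy u x (k *: v + a) = k * local_energy u x v + local_energy u x a.
Proof.
rewrite !LE_lin mulr_sumr -big_split /=; apply: eq_bigr => w _.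
by rewrite !mxE mulrDl mulrA.
Qed.

Lemma LE_delta (R : realType) (p : nat) (u : 'I_p) (x : config p) (w : 'I_p) :
  local_energy u x (delta_mx ord0 w : 'rV[R]_p) = cc u x w.
Proof.
rewrite LE_lin (bigD1 w) //= big1 ?addr0.
  by rewrite mxE !eqxx mul1r.
by move=> j /negbTE jw; rewrite mxE jw andbF mul0r.
Qed.

Lemma dir_to_1 (R : realType) (p : nat) (f : 'rV[R]_p -> R) (a v : 'rV[R]_p) :
  'D_v f a = 'D_(1:R) (fun h : R => f (h *: v + a)) 0.
Proof.
rewrite /derive /=; f_equal; f_equal; apply: funext => k /=.
rewrite scale0r add0r addr0; congr (_ *: (f (_ *: _ + _) - _)).
by rewrite -[k%:A]/(k * 1) mulr1.
Qed.

Lemma is_derive_finsum (R : realType) (I : finType) (F : I -> R -> R) (dF : I -> R) (x : R) :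
  (forall i, is_derive x (1:R) (F i) (dF i)) ->
  is_derive x (1:R) (fun h => \sum_i F i h) (\sum_i dF i).
Proof.
move=> H; rewrite -(fct_sumE _ _ F).
by elim/big_ind2 : _ => // [|] *; [exact: is_derive_cst|exact: is_deriveD].
Qed.

Lemma deriv_L (R : realType) (p : nat) (theta : 'I_p -> 'I_p -> R) (h : 'I_p -> R)
  (u : 'I_p) (a v : 'rV[R]_p) :
  'D_v (ISO_loss theta h u) a =
  \sum_x ising_mu theta h x * (expR (- local_energy u x a) * - local_energy u x v).
Proof.
rewrite dir_to_1.
have -> : (fun k : R => ISO_loss theta h u (k *: v + a)) =
  (fun k => \sum_x (fun x k => ising_mu theta h x * expR (- (k * local_energy u x v + local_energy u x a))) x k).
  by apply: funext => k; rewrite /ISO_loss; apply: eq_bigr => x _; rewrite LE_affine.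
apply: derive_val; apply: is_derive_finsum => x.
apply: is_derive_eq.
by rewrite /= mul0r add0r scaler0 add0r addr0 -[_%:A]/(_ * 1) mulr1 -[_ *: _]/(_ * _).
Qed.

Definition flip (p : nat) (v : 'I_p) (x : config p) : config p :=
  [ffun i => if i == v then ~~ x i else x i].

Lemma flipK (p : nat) (v : 'I_p) : involutive (flip v).
Proof.
move=> x; apply/ffunP => i; rewrite !ffunE.
by case: (i == v) => //; rewrite negbK.
Qed.

Lemma spin_flip (R : realType) (p : nat) (v : 'I_p) (x : config p) (i : 'I_p) :
  spin R (flip v x) i = if i == v then - spin R x i else spin R x i.
Proof.
by rewrite /spin ffunE; case: (i == v); case: (x i) => //=; rewrite opprK.
Qed.

Lemma spin_sq (R : realType) (p : nat) (x : config p) (i : 'I_p) : spin R x i ^+ 2 = 1.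
Proof. by rewrite /spin; case: (x i); rewrite ?sqrrN expr1n. Qed.

Lemma spin_norm (R : realType) (p : nat) (x : config p) (i : 'I_p) : `|spin R x i| = 1.
Proof. by rewrite /spin; case: (x i); rewrite ?normrN normr1. Qed.

Lemma sum_lt_v (R : realType) (p : nat) (g : 'I_p -> 'I_p -> R) (v : 'I_p) :
  \sum_(i : 'I_p) \sum_(j : 'I_p | (i < j)%N) (g i j * (i == v)%:R + g i j * (j == v)%:R) =
  \sum_(j : 'I_p | (v < j)%N) g v j + \sum_(i : 'I_p | (i < v)%N) g i v.
Proof.
under eq_bigr do rewrite big_split /=.
rewrite big_split /=; congr (_ + _).
  rewrite (bigD1 v) //= [X in _ + X]big1 ?addr0.
    by apply: eq_bigr => j _; rewrite eqxx mulr1.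
  by move=> i /negbTE iv; apply: big1 => j _; rewrite iv mulr0.
under eq_bigr do rewrite big_mkcond /=.
rewrite exchange_big /= (bigD1 v) //= [X in _ + X]big1 ?addr0.
  rewrite [RHS]big_mkcond /=; apply: eq_bigr => i _.
  by rewrite eqxx mulr1.
move=> j /negbTE jv; apply: big1 => i _.
by case: ifP => _; rewrite ?jv ?mulr0.
Qed.

Lemma term_bound (R : realType) (t a b : R) (ea eb : bool) :
  `|a| = 1 -> `|b| = 1 ->
  `|t * a * b - t * (if ea then - a else a) * (if eb then - b else b)| <=
  2 * `|t| * ea%:R + 2 * `|t| * eb%:R.
Proof.
move=> Ha Hb.
have nab : `|t * a * b| = `|t| by rewrite !normrM Ha Hb !mulr1.
have t0 := normr_ge0 t.
case: ea; case: eb => /=.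
- have -> : t * a * b - t * - a * - b = 0 by ring.
  by rewrite normr0; lra.
- have -> : t * a * b - t * - a * b = t * a * b + t * a * b by ring.
  apply: le_trans (ler_normD _ _) _; rewrite nab; lra.
- have -> : t * a * b - t * a * - b = t * a * b + t * a * b by ring.
  apply: le_trans (ler_normD _ _) _; rewrite nab; lra.
- by rewrite subrr normr0; lra.
Qed.

Lemma energy_flip (R : realType) (p : nat) (theta : 'I_p -> 'I_p -> R) (h : 'I_p -> R)
  (tsym : forall u v : 'I_p, theta u v = theta v u) (v : 'I_p) (x : config p) :
  `|ising_energy theta h x - ising_energy theta h (flip v x)| <=
  2 * (\sum_(j | j != v) `|theta v j| + `|h v|).
Proof.
rewrite /ising_energy opprD addrACA -!sumrB mulrDr.
apply: le_trans (ler_normD _ _) _; apply: lerD.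
  under eq_bigr do rewrite -sumrB.
  apply: le_trans (ler_norm_sum _ _ _) _.
  apply: (@le_trans _ _ (\sum_(i : 'I_p) \sum_(j : 'I_p | (i < j)%N)
     ((2 * `|theta i j|) * (i == v)%:R + (2 * `|theta i j|) * (j == v)%:R))).
    apply: ler_sum => i _; apply: le_trans (ler_norm_sum _ _ _) _.
    apply: ler_sum => j _; rewrite !spin_flip.
    by apply: term_bound; apply: spin_norm.
  rewrite sum_lt_v le_eqVlt; apply/orP; left; apply/eqP.
  rewrite big_mkcond [X in _ + X]big_mkcond [in RHS]big_mkcond /= -big_split mulr_sumr /=; apply: eq_bigr => j _.
  rewrite tsym -(inj_eq val_inj) /=.
  have [vj|jv|vj] := ltngtP v j.
  - by rewrite /= addr0.
  - by rewrite /= add0r.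
  - by rewrite /= addr0 mulr0.
rewrite (bigD1 v) //= big1 ?addr0.
  rewrite spin_flip eqxx mulrN opprK -mulr2n normrMn normrM spin_norm mulr1.
  rewrite mulr2n; lra.
by move=> i /negbTE iv; rewrite spin_flip iv subrr.
Qed.

Lemma Z_gt0 (R : realType) (p : nat) (theta : 'I_p -> 'I_p -> R) (h : 'I_p -> R) (x : config p) :
  0 < ising_Z theta h.
Proof.
rewrite /ising_Z (bigD1 x) //=.
apply: lt_le_trans (expR_gt0 (ising_energy theta h x)) _.
by rewrite lerDl; apply: sumr_ge0 => i _; apply: expR_ge0.
Qed.

Lemma mu_ge0 (R : realType) (p : nat) (theta : 'I_p -> 'I_p -> R) (h : 'I_p -> R) (x : config p) :
  0 <= ising_mu theta h x.
Proof. by rewrite /ising_mu divr_ge0 ?expR_ge0 // ltW // (Z_gt0 _ _ x). Qed.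

Lemma mu_sum (R : realType) (p : nat) (theta : 'I_p -> 'I_p -> R) (h : 'I_p -> R) :
  \sum_x ising_mu theta h x = 1.
Proof.
have [x _] : exists x : config p, true by exists [ffun=> true].
by rewrite /ising_mu -mulr_suml divff // gt_eqF // (Z_gt0 _ _ x).
Qed.

Lemma mu_flip (R : realType) (p : nat) (theta : 'I_p -> 'I_p -> R) (h : 'I_p -> R) (gamma : R)
  (tsym : forall u v : 'I_p, theta u v = theta v u)
  (width : l1_width_le theta h gamma) (v : 'I_p) (x : config p) :
  expR (- (2 * gamma)) * ising_mu theta h x <= ising_mu theta h (flip v x).
Proof.
rewrite /ising_mu mulrA ler_pM2r; last by rewrite invr_gt0 (Z_gt0 _ _ x).
rewrite -expRD ler_expR.
have := energy_flip h tsym v x; have := width v.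
move=> W /ler_normlP [H1 H2]; lra.
Qed.

Lemma pw (R : realType) (a b A D k : R) :
  0 <= a -> 0 <= b -> 0 <= k -> k <= 1 -> k * a <= b -> k * b <= a ->
  k * (a + b) * D ^+ 2 <= a * (A + D) ^+ 2 + b * (A - D) ^+ 2.
Proof.
move=> a0 b0 k0 k1 ka kb.
have HD := sqr_ge0 D; have HA1 := sqr_ge0 (A + D); have HA2 := sqr_ge0 (A - D).
have HA := sqr_ge0 A.
have [ab|ba] := leP a b.
  have E : a * (A + D) ^+ 2 + b * (A - D) ^+ 2 =
    2 * a * (A ^+ 2 + D ^+ 2) + (b - a) * (A - D) ^+ 2 by ring.
  rewrite E; have : 0 <= (b - a) * (A - D) ^+ 2 by apply: mulr_ge0 => //; lra.
  have : k * (a + b) <= 2 * a by nra.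
  nra.
have E : a * (A + D) ^+ 2 + b * (A - D) ^+ 2 =
  2 * b * (A ^+ 2 + D ^+ 2) + (a - b) * (A + D) ^+ 2 by ring.
rewrite E; have : 0 <= (a - b) * (A + D) ^+ 2 by apply: mulr_ge0 => //; lra.
have : k * (a + b) <= 2 * b by nra.
nra.
Qed.

Lemma variance (R : realType) (p : nat) (theta : 'I_p -> 'I_p -> R) (h : 'I_p -> R) (gamma : R)
  (tsym : forall u v : 'I_p, theta u v = theta v u) (gamma_pos : 0 < gamma)
  (width : l1_width_le theta h gamma) (u v : 'I_p) (vu : v != u) (d : 'rV[R]_p) :
  expR (- (2 * gamma)) * d ord0 v ^+ 2 <= \sum_x ising_mu theta h x * local_energy u x d ^+ 2.
Proof.
set k := expR (- (2 * gamma)).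
pose A (x : config p) := d ord0 u + \sum_(w | (w != u) && (w != v)) d ord0 w * spin R x w.
have LEsq x : local_energy u x d ^+ 2 = (A x + d ord0 v * spin R x v) ^+ 2.
  rewrite /local_energy exprMn spin_sq mul1r (bigD1 v) //=; congr (_ ^+ 2).
  rewrite /A; lra.
have Aflip x : A (flip v x) = A x.
  rewrite /A; congr (_ + _); apply: eq_bigr => w /andP[_ /negbTE wv].
  by rewrite spin_flip wv.
have LEflip x : local_energy u (flip v x) d ^+ 2 = (A x - d ord0 v * spin R x v) ^+ 2.
  by rewrite LEsq Aflip spin_flip eqxx mulrN.
set S := \sum_x _.
have S2 : S = \sum_x ising_mu theta h (flip v x) * (A x - d ord0 v * spin R x v) ^+ 2.
  rewrite /S (reindex_inj (inv_inj (flipK v))) /=.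
  by apply: eq_bigr => x _; rewrite LEflip.
have k0 : 0 <= k by apply: expR_ge0.
have k1 : k <= 1 by rewrite /k expR_le1; lra.
have H : 2 * (k * d ord0 v ^+ 2) <= S + S.
  rewrite {2}S2 /S -big_split /=.
  apply: (@le_trans _ _ (\sum_x k * (ising_mu theta h x + ising_mu theta h (flip v x)) *
            (d ord0 v * spin R x v) ^+ 2)).
    rewrite le_eqVlt; apply/orP; left; apply/eqP.
    under eq_bigr do rewrite exprMn spin_sq mulr1.
    rewrite -mulr_suml -mulr_sumr big_split /= mu_sum.
    rewrite (reindex_inj (inv_inj (flipK v))) /=.
    under eq_bigr do rewrite flipK.
    rewrite mu_sum; ring.
  apply: ler_sum => x _; rewrite LEsq.
  apply: pw => //; try exact: mu_ge0.
    exact: mu_flip.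
  by have := mu_flip tsym width v (flip v x); rewrite flipK.
lra.
Qed.

Lemma grad_eq (R : realType) (p : nat) (theta : 'I_p -> 'I_p -> R) (h : 'I_p -> R)
  (u : 'I_p) (a d : 'rV[R]_p) :
  grad_inner (ISO_loss theta h u) a d =
  \sum_x ising_mu theta h x * (expR (- local_energy u x a) * - local_energy u x d).
Proof.
rewrite /grad_inner.
rewrite (eq_bigr (fun w => \sum_x d ord0 w * (ising_mu theta h x *
     (expR (- local_energy u x a) * - cc u x w)))); last first.
  move=> w _; rewrite deriv_L mulr_sumr; apply: eq_bigr => x _.
  congr (_ * (_ * (_ * - _))); exact: LE_delta.
rewrite exchange_big /=; apply: eq_bigr => x _.
rewrite [local_energy u x d]LE_lin -sumrN !mulr_sumr; apply: eq_bigr => w _.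
ring.
Qed.

Lemma LE_bound (R : realType) (p : nat) (u : 'I_p) (x : config p) (a : 'rV[R]_p) :
  `|local_energy u x a| <= l1norm a.
Proof.
rewrite LE_lin /l1norm; apply: le_trans (ler_norm_sum _ _ _) _.
apply: ler_sum => w _; rewrite normrM /cc normrM spin_norm mul1r.
by case: (w == u); rewrite ?normr1 ?spin_norm mulr1.
Qed.

Lemma l1_ts (R : realType) (p : nat) (theta : 'I_p -> 'I_p -> R) (h : 'I_p -> R) (gamma : R)
  (width : l1_width_le theta h gamma) (u : 'I_p) :
  l1norm (theta_star theta h u) <= gamma.
Proof.
apply: le_trans (width u); rewrite /l1norm (bigD1 u) //= mxE eqxx addrC.
rewrite lerD2r le_eqVlt; apply/orP; left; apply/eqP; apply: eq_bigr => w /negbTE wu.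
by rewrite mxE wu.
Qed.

Lemma l1_sub (R : realType) (p : nat) (a b : 'rV[R]_p) :
  l1norm (a - b) <= l1norm a + l1norm b.
Proof.
rewrite /l1norm -big_split /=; apply: ler_sum => w _.
by rewrite !mxE; apply: ler_normB.
Qed.

Theorem mainTheorem8 (R : realType) (p : nat)
  (theta : 'I_p -> 'I_p -> R) (h : 'I_p -> R) (gamma : R)
  (theta_sym : forall u v : 'I_p, theta u v = theta v u)
  (gamma_pos : 0 < gamma)
  (width : l1_width_le theta h gamma)
  (u : 'I_p) (t : 'rV[R]_p)
  (t_l1 : l1norm t <= gamma) :
  let ts := theta_star theta h u in
  let L := ISO_loss theta h u in
  L t - L ts - grad_inner L ts (t - ts)
    >= expR (- (3 * gamma)) / (2 + 2 * gamma)
       * \big[Num.max/0]_(v : 'I_p | v != u) (`|t ord0 v - ts ord0 v| ^+ 2).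
Proof.
cbv zeta.
set ts := theta_star theta h u.
set L := ISO_loss theta h u.
have tsl1 : l1norm ts <= gamma by apply: l1_ts.
have dl1 : l1norm (t - ts) <= 2 * gamma.
  by apply: le_trans (l1_sub _ _) _; lra.
set d := t - ts.
have eqL : L t - L ts - grad_inner L ts d =
  \sum_x ising_mu theta h x * (expR (- local_energy u x ts) *
      (expR (- local_energy u x d) - 1 + local_energy u x d)).
  rewrite grad_eq /L /ISO_loss -!sumrB; apply: eq_bigr => x _.
  have -> : t = 1 *: d + ts by rewrite scale1r /d subrK.
  rewrite LE_affine mul1r opprD expRD; ring.
rewrite eqL.
set c := expR (- gamma) / (2 + 2 * gamma).
have c0 : 0 < c by rewrite /c divr_gt0 ?expR_gt0 //; lra.
have step1 : c * (\sum_x ising_mu theta h x * local_energy u x d ^+ 2) <=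
  \sum_x ising_mu theta h x * (expR (- local_energy u x ts) *
      (expR (- local_energy u x d) - 1 + local_energy u x d)).
  rewrite mulr_sumr; apply: ler_sum => x _.
  rewrite mulrCA; apply: ler_wpM2l; first exact: mu_ge0.
  set z := local_energy u x d.
  have zb : `|z| <= 2 * gamma by apply: le_trans (LE_bound _ _ _) dl1.
  have eb : expR (- gamma) <= expR (- local_energy u x ts).
    rewrite ler_expR lerN2; apply: le_trans (ler_norm _) _.
    exact: le_trans (LE_bound _ _ _) tsl1.
  have kz := key_ineq z.
  have q : z ^+ 2 / (2 + 2 * gamma) <= z ^+ 2 / (2 + `|z|).
    apply: ler_wpM2l; first exact: sqr_ge0.
    rewrite lef_pV2 ?posrE; [by rewrite lerD2l | lra | by apply: ltr_wpDr; [exact: normr_ge0|]].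
  rewrite /c mulrAC -mulrA.
  apply: ler_pM => //.
  - by apply: divr_ge0; [exact: sqr_ge0 | lra].
  - exact: le_trans q kz.
apply: le_trans step1.
have -> : expR (- (3 * gamma)) / (2 + 2 * gamma) = c * expR (- (2 * gamma)).
  by rewrite /c mulrAC -expRD; congr (expR _ / _); lra.
rewrite -mulrA; apply: ler_wpM2l; first exact: ltW.
rewrite mulrC -ler_pdivlMr ?expR_gt0 //.
apply: bigmax_le.
  by apply: divr_ge0; [apply: sumr_ge0 => x _; apply: mulr_ge0; [exact: mu_ge0|exact: sqr_ge0] | exact: expR_ge0].
move=> v vu; rewrite ler_pdivlMr ?expR_gt0 // mulrC.
have := variance theta_sym gamma_pos width vu d.
by rewrite /d !mxE real_normK ?num_real.
Qed.
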